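(* Let $A$ and $B$ be differential rings and $\nu\colon A\to B$ a differential homomorphism. Suppose $B$ is differentially generated over $\nu(A)$ by a single element $\eta\in B$, and that there exist $b_1,\ldots,b_n\in A$ such that $\nu(b_k)\eta\in\nu(A)$ for all $k$ and $\{b_1,\ldots,b_n\}=A$. Then the contraction map $\nu^*\colon \operatorname{Spec}^\Delta B\to V(\ker\nu)$, $\mathfrak q\mapsto\nu^{-1}(\mathfrak q)$, is a homeomorphism, where $V(\ker\nu)\subseteq\operatorname{Spec}^\Delta A$ carries the subspace topology.
   Context: All rings are commutative with unit; homomorphisms preserve the unit. A differential ring is a ring equipped with finitely many pairwise commuting derivations; a differential homomorphism is a ring homomorphism commuting with the derivations. $B$ is differentially generated over $\nu(A)$ by $\eta$ if $B$ is the smallest differential subring of $B$ containing $\nu(A)$ and $\eta$ (i.e. $B$ is generated as a ring over $\nu(A)$ by all derivatives of $\eta$ of all orders). For a differential ring $A$, $\operatorname{Spec}^\Delta A$ is the set of prime ideals of $A$ closed under all the derivations (prime differential ideals); for $E\subseteq A$, $V(E)$ is the set of prime differential ideals containing $E$, and the sets $V(E)$ are the closed sets of the Kolchin topology on $\operatorname{Spec}^\Delta A$. For $E\subseteq A$, $\{E\}$ denotes the smallest radical differential ideal of $A$ containing $E$. *)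

(* Defs.v *)
From HB Require Import structures.
From mathcomp Require Import all_boot all_order all_algebra.
Set Implicit Arguments. Unset Strict Implicit. Unset Printing Implicit Defensive.
Import GRing.Theory.
Local Open Scope ring_scope.

Definition is_derivation (R : comPzRingType) (d : R -> R) : Prop :=
  (forall x y, d (x + y) = d x + d y) /\ (forall x y, d (x * y) = d x * y + x * d y).

Definition is_diff_ring (R : comPzRingType) (m : nat) (d : 'I_m -> R -> R) : Prop :=
  (forall i, is_derivation (d i)) /\ (forall i j x, d i (d j x) = d j (d i x)).

Definition is_diff_hom (A B : comPzRingType) (m : nat) (dA : 'I_m -> A -> A)
  (dB : 'I_m -> B -> B) (nu : {rmorphism A -> B}) : Prop :=
  forall i a, nu (dA i a) = dB i (nu a).

Definition subring_pred (R : comPzRingType) (S : R -> Prop) : Prop :=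
  S 1 /\ (forall x y, S x -> S y -> S (x - y)) /\ (forall x y, S x -> S y -> S (x * y)).

Definition diff_closed (R : comPzRingType) (m : nat) (d : 'I_m -> R -> R) (S : R -> Prop) :=
  forall i x, S x -> S (d i x).

Definition diff_generated (A B : comPzRingType) (m : nat) (dB : 'I_m -> B -> B)
  (nu : {rmorphism A -> B}) (eta : B) : Prop :=
  forall S : B -> Prop, subring_pred S -> diff_closed dB S ->
    (forall a, S (nu a)) -> S eta -> forall y, S y.

Definition is_ideal (R : comPzRingType) (I : R -> Prop) : Prop :=
  I 0 /\ (forall x y, I x -> I y -> I (x + y)) /\ (forall r x, I x -> I (r * x)).

Definition is_prime_ideal (R : comPzRingType) (P : R -> Prop) : Prop :=
  is_ideal P /\ ~ P 1 /\ (forall x y, P (x * y) -> P x \/ P y).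

Definition is_prime_diff_ideal (R : comPzRingType) (m : nat) (d : 'I_m -> R -> R)
  (P : R -> Prop) : Prop := is_prime_ideal P /\ diff_closed d P.

Definition is_radical_diff_ideal (R : comPzRingType) (m : nat) (d : 'I_m -> R -> R)
  (I : R -> Prop) : Prop :=
  is_ideal I /\ diff_closed d I /\ (forall x n, I (x ^+ n) -> I x).

(* {E} : smallest radical differential ideal containing E *)
Definition rad_diff_gen (R : comPzRingType) (m : nat) (d : 'I_m -> R -> R)
  (E : R -> Prop) : R -> Prop :=
  fun x => forall I, is_radical_diff_ideal d I -> (forall e, E e -> I e) -> I x.

Definition SpecD (R : comPzRingType) (m : nat) (d : 'I_m -> R -> R) : Type :=
  {P : R -> Prop | is_prime_diff_ideal d P}.

Definition Vset (R : comPzRingType) (E : R -> Prop) (P : R -> Prop) : Prop :=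
  forall e, E e -> P e.

Definition kolchin_closed (R : comPzRingType) (m : nat) (d : 'I_m -> R -> R)
  (C : SpecD d -> Prop) : Prop :=
  exists E : R -> Prop, forall p : SpecD d, C p <-> Vset E (proj1_sig p).

Definition ker_pred (A B : comPzRingType) (nu : {rmorphism A -> B}) : A -> Prop :=
  fun a => nu a = 0.

Definition Vker (A B : comPzRingType) (m : nat) (dA : 'I_m -> A -> A)
  (nu : {rmorphism A -> B}) : Type :=
  {p : SpecD dA | Vset (ker_pred nu) (proj1_sig p)}.

Definition Vker_closed (A B : comPzRingType) (m : nat) (dA : 'I_m -> A -> A)
  (nu : {rmorphism A -> B}) (C : Vker dA nu -> Prop) : Prop :=
  exists C' : SpecD dA -> Prop, kolchin_closed C' /\
    forall x : Vker dA nu, C x <-> C' (proj1_sig x).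

(* homeomorphism between spaces given by their families of closed sets:
   bijective, continuous, and closed (= inverse continuous) *)
Definition homeomorphism (X Y : Type) (clX : (X -> Prop) -> Prop)
  (clY : (Y -> Prop) -> Prop) (f : X -> Y) : Prop :=
  bijective f /\
  (forall C, clY C -> clX (fun x => C (f x))) /\
  (forall C, clX C -> clY (fun y => exists x, C x /\ f x = y)).

Definition contr (A B : comPzRingType) (nu : {rmorphism A -> B}) (q : B -> Prop) : A -> Prop :=
  fun a => q (nu a).

(* Main.v *)
Require Import Defs.
From HB Require Import structures.
From mathcomp Require Import all_boot all_order all_algebra.
From Stdlib Require Import Classical FunctionalExtensionality PropExtensionality ProofIrrelevance.
Set Implicit Arguments. Unset Strict Implicit.
Import GRing.Theory.
Local Open Scope ring_scope.

Lemma sig_eqP (T : Type) (P : T -> Prop) (x y : sig P) :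
  proj1_sig x = proj1_sig y -> x = y.
Proof. case: x => x hx; case: y => y hy /= e; subst y; f_equal; apply proof_irrelevance. Qed.

Lemma pred_ext (T : Type) (P Q : T -> Prop) : (forall x, P x <-> Q x) -> P = Q.
Proof. move=> h; apply functional_extensionality => x; apply propositional_extensionality; apply h. Qed.

Lemma idealMr (R : comPzRingType) (P : R -> Prop) : is_ideal P -> forall x r, P x -> P (x * r).
Proof. move=> [_ [_ h]] x r hx; rewrite mulrC; exact: h. Qed.

Lemma idealB (R : comPzRingType) (P : R -> Prop) : is_ideal P -> forall x y, P x -> P y -> P (x - y).
Proof. move=> [h0 [hD hM]] x y hx hy; apply: hD => //; rewrite -mulN1r; exact: hM. Qed.

Lemma primeM (R : comPzRingType) (P : R -> Prop) : is_prime_ideal P -> forall s t, ~ P s -> ~ P t -> ~ P (s * t).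
Proof. move=> [_ [_ h]] s t hs ht /h [] //. Qed.

Lemma primeX (R : comPzRingType) (P : R -> Prop) : is_prime_ideal P -> forall s N, ~ P s -> ~ P (s ^+ N).
Proof. move=> hP s N hs; elim: N => [|N IH]; first by rewrite expr0; case: hP => _ [].
rewrite exprS; exact: primeM. Qed.

Lemma prime_rad (R : comPzRingType) m (d : 'I_m -> R -> R) (P : R -> Prop) :
  is_prime_diff_ideal d P -> is_radical_diff_ideal d P.
Proof. move=> [hP hd]; split; first by case: hP. split => // x n; elim: n => [|n IH].
  by rewrite expr0 => h; case: hP => _ [].
rewrite exprS => /(proj2 (proj2 hP)) [] //. Qed.

Lemma L_sub (A B : comPzRingType) (nu : {rmorphism A -> B}) s1 s2 a1 a2 x y :
  nu s1 * x = nu a1 -> nu s2 * y = nu a2 -> nu (s1 * s2) * (x - y) = nu (s2 * a1 - s1 * a2).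
Proof. move=> h1 h2; rewrite rmorphB !rmorphM -h1 -h2 mulrBr.
by rewrite !mulrA (mulrC (nu s2) (nu s1)). Qed.

Lemma L_add (A B : comPzRingType) (nu : {rmorphism A -> B}) s1 s2 a1 a2 x y :
  nu s1 * x = nu a1 -> nu s2 * y = nu a2 -> nu (s1 * s2) * (x + y) = nu (s2 * a1 + s1 * a2).
Proof. move=> h1 h2; rewrite rmorphD !rmorphM -h1 -h2 mulrDr.
by rewrite !mulrA (mulrC (nu s2) (nu s1)). Qed.

Lemma L_mul (A B : comPzRingType) (nu : {rmorphism A -> B}) s1 s2 a1 a2 x y :
  nu s1 * x = nu a1 -> nu s2 * y = nu a2 -> nu (s1 * s2) * (x * y) = nu (a1 * a2).
Proof. move=> h1 h2; rewrite !rmorphM -h1 -h2.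
by rewrite !mulrA -(mulrA (nu s1)) (mulrC (nu s2) x) !mulrA. Qed.

Lemma L_der (A B : comPzRingType) m (dA : 'I_m -> A -> A) (dB : 'I_m -> B -> B)
  (hB : is_diff_ring dB) (nu : {rmorphism A -> B}) (hnu : is_diff_hom dA dB nu) i s a y :
  nu s * y = nu a -> nu (s * s) * dB i y = nu (s * dA i a - dA i s * a).
Proof. move=> h.
have h2 : nu (dA i s) * y + nu s * dB i y = nu (dA i a).
  by rewrite !hnu -h (proj2 (proj1 hB i)).
rewrite rmorphB !rmorphM -h2 -h mulrDr !mulrA (mulrC (nu s) (nu (dA i s))).
by rewrite addrAC subrr add0r. Qed.

Definition qpred (A B : comPzRingType) (nu : {rmorphism A -> B}) (p : A -> Prop) (y : B) :=
  exists s a, ~ p s /\ p a /\ nu s * y = nu a.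

Lemma idealBK (R : comPzRingType) (P : R -> Prop) : is_ideal P -> forall x y, P (x - y) -> P y -> P x.
Proof. move=> [h0 [hD hM]] x y h1 h2; rewrite -(subrK y x); exact: hD. Qed.

Theorem lemma2p2 (m : nat) (A B : comPzRingType)
  (dA : 'I_m -> A -> A) (dB : 'I_m -> B -> B)
  (hA : is_diff_ring dA) (hB : is_diff_ring dB)
  (nu : {rmorphism A -> B}) (hnu : is_diff_hom dA dB nu)
  (eta : B) (hgen : diff_generated dB nu eta)
  (n : nat) (b : 'I_n -> A)
  (hb : forall k, exists a, nu (b k) * eta = nu a)
  (hbA : forall x : A, rad_diff_gen dA (fun a => exists k, a = b k) x) :
  exists wd : forall q : SpecD dB,
      is_prime_diff_ideal dA (contr nu (proj1_sig q)) /\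
      Vset (ker_pred nu) (contr nu (proj1_sig q)),
    homeomorphism (@kolchin_closed B m dB) (@Vker_closed A B m dA nu)
      (fun q : SpecD dB =>
         exist (fun p : SpecD dA => Vset (ker_pred nu) (proj1_sig p))
           (exist (is_prime_diff_ideal dA) (contr nu (proj1_sig q)) (proj1 (wd q)))
           (proj2 (wd q))).
Proof.
have K : forall k y, exists N a, nu (b k ^+ N) * y = nu a.
  move=> k y; apply: (hgen (fun y => exists N a, nu (b k ^+ N) * y = nu a)).
  - split; first by exists 0%N, 1; rewrite expr0 rmorph1 mulr1.
    split.
      move=> x z [N [a ha]] [M [c hc]]; exists (N + M)%N; rewrite exprD; eexists; exact (L_sub ha hc).
    move=> x z [N [a ha]] [M [c hc]]; exists (N + M)%N; rewrite exprD; eexists; exact (L_mul ha hc).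
  - move=> i x [N [a ha]]; exists (N + N)%N; rewrite exprD; have hh := L_der hB hnu i ha; eexists; exact hh.
  - by move=> a; exists 0%N, a; rewrite expr0 rmorph1 mul1r.
  - by case: (hb k) => a ha; exists 1%N, a; rewrite expr1.
have P1 : forall P, is_prime_diff_ideal dA P -> exists k, ~ P (b k).
  move=> P hP; case: (classic (exists k, ~ P (b k))) => // h; exfalso.
  have hall : forall k, P (b k) by move=> k; apply: NNPP => hk; apply: h; exists k.
  have : P 1 by move: (hbA 1 P (prime_rad hP)); apply => e [k ->]; exact: hall.
  by case: hP => [[_ []]].
have wd' : forall q : B -> Prop, is_prime_diff_ideal dB q ->
    is_prime_diff_ideal dA (contr nu q) /\ Vset (ker_pred nu) (contr nu q).
  move=> q [[[h0 [hD hM]] [h1 hpr]] hd]; rewrite /contr; split; last first.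
    by move=> e; rewrite /ker_pred => ->.
  split; last by move=> i x hx; rewrite hnu; exact: hd.
  split; first split.
  - by rewrite rmorph0.
  - split; first by move=> x y hx hy; rewrite rmorphD; exact: hD.
    by move=> r x hx; rewrite rmorphM; exact: hM.
  split; first by rewrite rmorph1.
  by move=> x y; rewrite rmorphM; exact: hpr.
have Q : forall p, is_prime_diff_ideal dA p -> Vset (ker_pred nu) p ->
    is_prime_diff_ideal dB (qpred nu p).
  move=> p hp hker; have hp' := hp; case: hp' => [[[h0 [hD hM]] [h1 hpr]] hd].
  split; last first.
    move=> i y [s [a [hs [ha e]]]]; exists (s * s), (s * dA i a - dA i s * a).
    split; first exact (primeM (proj1 hp) hs hs).
    split; last exact (L_der hB hnu i e).
    apply: (idealB (proj1 (proj1 hp))); apply: hM => //; exact: hd.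
  split; first split.
  - by exists 1, 0; rewrite mulr0 rmorph0.
  - split.
      move=> x y [s1 [a1 [hs1 [ha1 e1]]]] [s2 [a2 [hs2 [ha2 e2]]]].
      exists (s1 * s2), (s2 * a1 + s1 * a2); split; first exact (primeM (proj1 hp) hs1 hs2).
      split; last exact (L_add e1 e2).
      by apply: hD; apply: hM.
    move=> r x [s [a [hs [ha e]]]]; case: (P1 p hp) => k hk; case: (K k r) => N [c hc].
    exists (b k ^+ N * s), (c * a); split.
      exact (primeM (proj1 hp) (primeX (proj1 hp) (N:=N) hk) hs).
    split; [exact: hM| exact (L_mul hc e)].
  split.
    move=> [s [a [hs [ha e]]]]; rewrite mulr1 in e.
    have : nu (s - a) = 0 by rewrite rmorphB e subrr.
    move/hker => hsa; apply: hs; exact (idealBK (proj1 (proj1 hp)) hsa ha).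
  move=> x y [s [a [hs [ha e]]]]; case: (P1 p hp) => k hk.
  case: (K k x) => N [c hc]; case: (K k y) => M [c2 hc2].
  have e2 := L_mul hc hc2.
  have : nu (s * (c * c2) - (b k ^+ N * b k ^+ M) * a) = 0.
    by rewrite rmorphB (rmorphM _ s) -e2 (rmorphM _ _ a) -e mulrCA subrr.
  move/hker => h3.
  have h4 : p (s * (c * c2)) := idealBK (proj1 (proj1 hp)) h3 (hM _ _ ha).
  case: (hpr _ _ h4) => // /hpr [] hcc.
    left; exists (b k ^+ N), c; split; [exact (primeX (proj1 hp) (N:=N) hk)| by split].
  right; exists (b k ^+ M), c2; split; [exact (primeX (proj1 hp) (N:=M) hk)| by split].
have CQ : forall p, is_prime_diff_ideal dA p -> Vset (ker_pred nu) p ->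
    forall x, qpred nu p (nu x) <-> p x.
  move=> p hp hker x; split; last first.
    by move=> hx; exists 1, x; rewrite rmorph1 mul1r; split => //; case: hp => [[_ []]].
  move=> [s [a [hs [ha e]]]].
  have : nu (s * x - a) = 0 by rewrite rmorphB rmorphM e subrr.
  move/hker => h1; have := idealBK (proj1 (proj1 hp)) h1 ha.
  by case/(proj2 (proj2 (proj1 hp))).
have QC : forall q, is_prime_diff_ideal dB q -> forall y, qpred nu (contr nu q) y <-> q y.
  move=> q hq y; split.
    move=> [s [a [hs [ha e]]]]; rewrite /contr -e in ha.
    by case/(proj2 (proj2 (proj1 hq))): ha.
  move=> hy; have hcp := wd' q hq; case: (P1 _ (proj1 hcp)) => k hk.
  case: (K k y) => N [a hc]; exists (b k ^+ N), a; split.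
    exact (primeX (proj1 (proj1 hcp)) (N:=N) hk).
  split => //; rewrite /contr -hc; apply: (proj2 (proj2 (proj1 (proj1 hq)))) => //.
have wd : forall q : SpecD dB,
      is_prime_diff_ideal dA (contr nu (proj1_sig q)) /\
      Vset (ker_pred nu) (contr nu (proj1_sig q)).
  by move=> q; apply: wd'; exact ((proj2_sig q)).
pose f := fun q : SpecD dB =>
         exist (fun p : SpecD dA => Vset (ker_pred nu) (proj1_sig p))
           (exist (is_prime_diff_ideal dA) (contr nu (proj1_sig q)) (proj1 (wd q)))
           (proj2 (wd q)).
pose g := fun x : Vker dA nu =>
  exist (is_prime_diff_ideal dB) (qpred nu (proj1_sig (proj1_sig x)))
    (Q _ (proj2_sig (proj1_sig x)) (proj2_sig x)).
have hgf : forall x, f (g x) = x.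
  move=> x; apply: sig_eqP; apply: sig_eqP => /=; apply: pred_ext => a.
  exact (CQ _ (proj2_sig (proj1_sig x)) (proj2_sig x) a).
exists wd; rewrite -/f; split; [|split].
- exists g => // q; apply: sig_eqP => /=; apply: pred_ext => y.
  exact (QC _ (proj2_sig q) y).
- move=> C [C' [[E hE] hC]]; exists (fun y => exists e, E e /\ y = nu e) => q; split.
    move/hC/hE => /= hV y [e [he ->]]; exact (hV e he).
  by move=> hV; apply/hC/hE => e he /=; apply: hV; exists e.
- move=> C [E hE].
  exists (fun p : SpecD dA => Vset (fun a => exists e s, E e /\ nu s * e = nu a) (proj1_sig p)).
  split; first by exists (fun a => exists e s, E e /\ nu s * e = nu a).
  move=> x; split.
    move=> [q [hCq <-]] a [e [s [he hs]]] /=; rewrite /contr -hs.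
    apply: (proj2 (proj2 (proj1 (proj1 (proj2_sig q))))).
    exact ((proj1 (hE q) hCq e he)).
  move=> hV; exists (g x); split => //; apply/hE => e he /=.
  move: hV; case: x => [[p hp] hk] /= hV.
  case: (P1 p hp) => k hkk; case: (K k e) => N [a hc]; exists (b k ^+ N), a.
  split; first exact (primeX (proj1 hp) (N:=N) hkk).
  split => //; apply: hV; by exists e, (b k ^+ N); split.
Qed.
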